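(* Let $G$ be a finite group and $H \le G$ a subgroup with $H \neq \{e\}$. Let $X$ be the set of right cosets of $H$ in $G$, on which $G$ acts by right multiplication; for $g \in G$ let $\mathrm{fix}_X(g)$ be the number of points of $X$ fixed by $g$, and let $r_X(G)$ be the number of orbits of $H$ on $X$. Then (i) $D_H > \frac{1}{|G|}\sum_{h \in H,\, h \neq e} \mathrm{fix}_X(h)$; (ii) $D_H > r_X(G)/|X| - 1/|H|$.
   Context: For a finite group $G$, let $\mathrm{Irr}(G)$ be its set of complex irreducible characters and $d_\chi=\chi(e)$. For $H \le G$ let $D_H = \frac{1}{|G|}\sum_{\chi \in \mathrm{Irr}(G)} d_\chi \big|\sum_{h \in H, h \neq e}\chi(h)\big|$, the $L_1$ distance between the distributions $P_H(\chi)=\frac{d_\chi}{|G|}\sum_{h\in H}\chi(h)$ and $P_{\{e\}}$ on $\mathrm{Irr}(G)$. *)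

(* Defs.v *)
From mathcomp Require Import all_boot all_order all_algebra all_fingroup all_solvable all_field all_character.
Set Implicit Arguments. Unset Strict Implicit. Unset Printing Implicit Defensive.
Import GRing.Theory Num.Theory.
Local Open Scope ring_scope.

Definition D_H (gT : finGroupType) (G H : {group gT}) : algC :=
  (#|G|%:R)^-1 * \sum_(i : Iirr G) 'chi[G]_i 1%g * `|\sum_(h in (H^#)%g) 'chi[G]_i h|.

Definition fixX (gT : finGroupType) (G H : {group gT}) (g : gT) : nat :=
  #|[set X in rcosets H G | (X :* g)%g == X]|.

Definition rX (gT : finGroupType) (G H : {group gT}) : nat :=
  #|[set orbit 'Rs H X | X in rcosets H G]|.

(* Main.v *)
Require Import Defs.
From mathcomp Require Import all_boot all_order all_algebra all_fingroup all_solvable all_field all_character.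
Import GRing.Theory Num.Theory.
Local Open Scope ring_scope.
Import Order.TTheory.
From mathcomp Require Import ring.
Lemma term_le (R : numDomainType) (k : nat) (a m : R) :
  (0 < k)%N -> 0 <= m -> m <= a ->
  (k%:R * m - a) ^+ 2 <= k%:R * a * `|k%:R * m - a|.
Proof.
case: k => // k _ m0 ma.
have a0 : 0 <= a := le_trans m0 ma.
have sR : k.+1%:R * m - a \is Num.real by rewrite rpredB ?rpredM ?ger0_real.
have nle : `|k.+1%:R * m - a| <= k.+1%:R * a.
  rewrite real_ler_norml //; apply/andP; split.
    rewrite -subr_ge0.
    have -> : k.+1%:R * m - a - - (k.+1%:R * a) = k.+1%:R * m + k%:R * a.
      by rewrite -natr1; ring.
    by rewrite addr_ge0 ?mulr_ge0 ?ler0n.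
  rewrite -subr_ge0.
  have -> : k.+1%:R * a - (k.+1%:R * m - a) = k.+1%:R * (a - m) + a.
    by ring.
  by rewrite addr_ge0 ?mulr_ge0 ?ler0n ?subr_ge0.
rewrite -real_normK // expr2.
by rewrite ler_wpM2r ?normr_ge0.
Qed.

Lemma key_ineq (R : numFieldType) (I : finType) (i0 : I) (k : nat) (a m : I -> R) :
  (1 < k)%N -> (forall i, 0 <= m i) -> (forall i, m i <= a i) ->
  m i0 = 1 -> a i0 = 1 -> \sum_i a i * (k%:R * m i - a i) = 0 ->
  \sum_i m i * (k%:R * m i - a i) < \sum_i a i * `|k%:R * m i - a i|.
Proof.
move=> k1 m0 ma mi0 ai0 sum0.
have k0 : (0 < k)%N by apply: ltn_trans k1.
have kR : 0 < k%:R :> R by rewrite ltr0n.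
have -> : \sum_i m i * (k%:R * m i - a i) =
          k%:R^-1 * \sum_i (k%:R * m i - a i) ^+ 2.
  have -> : \sum_i m i * (k%:R * m i - a i) = k%:R^-1 *
     (\sum_i (k%:R * m i - a i) ^+ 2 + \sum_i a i * (k%:R * m i - a i)).
    rewrite -big_split mulr_sumr; apply: eq_bigr => i _.
    by rewrite /=; field; rewrite gt_eqF.
  by rewrite sum0 addr0.
rewrite -(ltr_pM2l kR) mulrA mulfV ?gt_eqF // mul1r mulr_sumr.
rewrite (bigD1 i0) //= [X in _ < X](bigD1 i0) //=.
apply: ltr_leD.
  rewrite mi0 ai0 mulr1 mul1r.
  clear sum0; case: k k1 {k0 kR} => // k k1.
  rewrite -natr1 addrK normr_nat expr2 ltr_pM2r ?ltr0n //.
  by rewrite ltrDl ltr01.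
apply: ler_sum => i _; rewrite mulrA; exact: term_le.
Qed.
Lemma fix_count (gT : finGroupType) (G H : {group gT}) (h : gT) :
  (H \subset G)%g ->
  (\sum_(y in G) ((h ^ y)%g \in H))%N = (#|H| * fixX G H h)%N.
Proof.
move=> sHG.
rewrite (reindex_inj invg_inj) /=.
rewrite (eq_bigl (mem G)); last by move=> y; rewrite /= groupV.
rewrite (set_partition_big _ (rcosets_partition sHG)) /=.
rewrite /fixX -sum1_card big_distrr /=.
rewrite [LHS]big_mkcond [RHS]big_mkcond /=.
apply: eq_bigr => X _; rewrite inE; case: ifP => XG //=.
have [x Gx ->] := rcosetsP XG.
have key : ((H :* x :* h == H :* x) = (x * h * x^-1 \in H))%g.
  rewrite -rcosetM -mem_rcoset; apply/eqP/idP => [<-|/rcoset_eqP //].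
  exact: rcoset_refl.
rewrite key.
rewrite (eq_bigr (fun _ => (x * h * x^-1 \in H)%g : nat)); last first.
  move=> y /rcosetP[a Ha ->]; rewrite conjgE invgK invMg.
  have -> : (a * x * (h * (x^-1 * a^-1)) = (x * h * x^-1) ^ a^-1)%g.
    by rewrite conjgE invgK !mulgA.
  by rewrite groupJr ?groupV.
rewrite sum_nat_const card_rcoset muln1; by case: ifP => _; rewrite ?muln0 ?muln1.
Qed.

Lemma perm_char (gT : finGroupType) (G H : {group gT}) (h : gT) :
  (H \subset G)%g -> 'Ind[G, H] (1 : 'CF(H)) h = (fixX G H h)%:R.
Proof.
move=> sHG; rewrite cfIndE //.
under eq_bigr do rewrite cfun1E.
by rewrite -natr_sum fix_count // natrM mulKf ?neq0CG.
Qed.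

Lemma sumH (gT : finGroupType) (G H : {group gT}) (i : Iirr G) :
  (H \subset G)%g ->
  \sum_(x in H) 'chi[G]_i x = #|H|%:R * '['Res[H] 'chi[G]_i, 1]_H.
Proof.
move=> sHG; rewrite cfdotE mulrA mulfV ?neq0CG // mul1r.
by apply: eq_bigr => x Hx; rewrite cfResE // cfun1E Hx conjC1 mulr1.
Qed.

Theorem corollary2 (gT : finGroupType) (G H : {group gT})
  (sHG : (H \subset G)%g) (ntH : H != 1%G) :
  (#|G|%:R)^-1 * \sum_(h in (H^#)%g) (fixX G H h)%:R < D_H G H
  /\ (rX G H)%:R / (#|G : H|%g%:R) - (#|H|%:R)^-1 < D_H G H :> algC.
Proof.
pose a i := 'chi[G]_i 1%g.
pose m i := '['Res[H] 'chi[G]_i, 1]_H.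
have hs i : \sum_(h in (H^#)%g) 'chi[G]_i h = #|H|%:R * m i - a i.
  by rewrite /m -sumH // (big_setD1 1%g (group1 H)) /= addrC addrK.
have m0 i : 0 <= m i.
  by apply: natr_ge0; apply: Cnat_cfdot_char; rewrite ?cfRes_char ?irr_char ?cfun1_char.
have ma i : m i <= a i.
  rewrite -(ler_pM2l (gt0CG H)) /m -sumH // -[X in X <= _]ger0_norm; last first.
    by rewrite sumH // mulr_ge0 ?ler0n ?m0.
  apply: le_trans (ler_norm_sum _ _ _) _.
  rewrite mulr_natl -sumr_const; apply: ler_sum => x _.
  exact/char1_ge_norm/irr_char.
have mi0 : m 0 = 1 by rewrite /m irr0 cfRes_cfun1 cfnorm1.
have ai0 : a 0 = 1 by rewrite /a irr0 cfun1E group1.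
have sum0 : \sum_i a i * (#|H|%:R * m i - a i) = 0.
  under eq_bigr do rewrite -hs mulr_sumr.
  rewrite exchange_big /= big1 // => h /setD1P[nt1 Hh].
  transitivity (cfReg G h); last by rewrite cfRegE (negPf nt1).
  rewrite cfReg_sum sum_cfunE; apply: eq_bigr => i _; by rewrite cfunE.
have k1 : (1 < #|H|)%N by rewrite cardG_gt1.
have fixE : \sum_(h in (H^#)%g) (fixX G H h)%:R = \sum_i m i * (#|H|%:R * m i - a i).
  under eq_bigr do rewrite -perm_char //.
  rewrite (cfun_sum_cfdot (@cfInd _ G H 1)).
  under eq_bigr do rewrite sum_cfunE.
  rewrite exchange_big /=; apply: eq_bigr => i _.
  under eq_bigr do rewrite cfunE.
  rewrite -mulr_sumr hs; congr (_ * _).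
  by rewrite -Frobenius_reciprocity cfdotC conj_natr // Cnat_cfdot_char ?cfRes_char ?irr_char ?cfun1_char.
have DE : D_H G H = #|G|%:R^-1 * \sum_i a i * `|#|H|%:R * m i - a i|.
  by rewrite /D_H; congr (_ * _); apply: eq_bigr => i _; rewrite hs.
have part1 : (#|G|%:R)^-1 * \sum_(h in (H^#)%g) (fixX G H h)%:R < D_H G H.
  rewrite DE fixE ltr_pM2l ?invr_gt0 ?gt0CG //.
  exact: (@key_ineq _ _ 0 #|H| a m k1 m0 ma mi0 ai0 sum0).
split => //.
suff -> : (rX G H)%:R / (#|G : H|%g%:R) - (#|H|%:R)^-1 = (#|G|%:R)^-1 * \sum_(h in (H^#)%g) (fixX G H h)%:R :> algC by [].
have FC := Frobenius_Cauchy (subset_trans sHG (actsRs_rcosets H G)).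
have fixE' a0 : #|'Fix_(rcosets H G | 'Rs)[a0]%g%act| = fixX G H a0.
  by apply: eq_card => X; rewrite !inE sub1set inE /= rcosetE.
rewrite (eq_bigr _ (fun a0 _ => fixE' a0)) in FC.
rewrite (big_setD1 1%g (group1 H)) /= in FC.
have fix1 : fixX G H 1 = #|G : H|%g.
  by rewrite /fixX /indexg; apply: eq_card => X; rewrite inE rcoset1 eqxx andbT.
rewrite fix1 in FC.
have FCR := congr1 (fun n => n%:R : algC) FC.
rewrite /= natrD natr_sum natrM in FCR.
have LG := congr1 (fun n => n%:R : algC) (Lagrange sHG).
rewrite /= natrM in LG.
rewrite -LG.
set F := \sum_(h in _) _ in FCR *.
set r := #|[set orbit _ H x | x in _]|%:R in FCR *.
have -> : F = r * #|H|%:R - #|G : H|%g%:R :> algC by rewrite -FCR addrC addKr.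
have n0 : #|G : H|%g%:R != 0 :> algC by rewrite pnatr_eq0 -lt0n indexg_gt0.
have k0 : #|H|%:R != 0 :> algC by rewrite neq0CG.
by field; rewrite n0 k0.
Qed.
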